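(* Let $G$ be a finite GVZ-group with $|\mathrm{cd}(G)|=2$. Then $G$ has nilpotency class $2$.
   Context: All groups are finite. $\mathrm{Irr}(G)$ is the set of complex irreducible characters of $G$ and $\mathrm{cd}(G)=\{\chi(1):\chi\in\mathrm{Irr}(G)\}$. For a character $\chi$, $Z(\chi)=\{g\in G: |\chi(g)|=\chi(1)\}$. A nonabelian group $G$ is a GVZ-group if for every $\chi\in\mathrm{Irr}(G)$ we have $\chi(g)=0$ for all $g\in G\setminus Z(\chi)$. *)

(* Defs.v *)
From mathcomp Require Import all_boot all_order all_algebra all_fingroup all_solvable all_field all_character.
Set Implicit Arguments. Unset Strict Implicit. Unset Printing Implicit Defensive.
Import GRing.Theory Num.Theory.
Local Open Scope ring_scope.

Definition cd (gT : finGroupType) (G : {group gT}) : seq algC :=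
  undup [seq 'chi[G]_i 1%g | i : Iirr G].

Definition GVZ (gT : finGroupType) (G : {group gT}) : Prop :=
  ~~ abelian G /\
  forall (i : Iirr G) (g : gT), g \in G -> g \notin ('Z('chi[G]_i))%CF ->
    'chi[G]_i g = 0.

(* Main.v *)
Require Import Defs.
From mathcomp Require Import all_boot all_order all_algebra all_fingroup all_solvable all_field all_character.
Set Implicit Arguments. Unset Strict Implicit. Unset Printing Implicit Defensive.
Import GRing.Theory Num.Theory.
Local Open Scope ring_scope.

Section Aux.
Variables (gT : finGroupType) (G : {group gT}).

Lemma linE (i : Iirr G) : ('chi_i \is a linear_char) = ('chi_i 1%g == 1).
Proof. by rewrite qualifE/= irr_char. Qed.

Lemma cd_mem (i : Iirr G) : 'chi_i 1%g \in cd G.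
Proof. by rewrite mem_undup; apply/mapP; exists i; rewrite ?mem_enum. Qed.

Lemma cd_two (i j : Iirr G) : size (cd G) = 2%N ->
  'chi_i 1%g != 1 -> 'chi_j 1%g != 1 -> 'chi_i 1%g = 'chi_j 1%g.
Proof.
move=> s2 ni nj; apply/eqP; apply: contraT => nij.
have : (size [:: 1%R : algC; 'chi_i 1%g; 'chi_j 1%g] <= size (cd G))%N.
  apply: uniq_leq_size.
    by rewrite /= !inE negb_or !(eq_sym 1) ni nj nij.
  move=> x; rewrite !inE => /or3P[] /eqP->; rewrite ?cd_mem //.
  by have := cd_mem 0; rewrite irr0 cfun1E group1.
by rewrite s2.
Qed.

Hypothesis gvz : GVZ G.

Lemma gvz_on (i : Iirr G) : 'chi_i \in 'CF(G, 'Z('chi_i)%CF).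
Proof.
apply/cfun_onP => x nx; have [Gx|nGx] := boolP (x \in G).
  exact: gvz.2.
exact: cfun0.
Qed.

Lemma gvz_deg (i : Iirr G) : ('chi_i 1%g) ^+ 2 = (#|G : 'Z('chi_i)%CF|)%g%:R.
Proof.
case: (irr1_bound i) => _; rewrite gvz_on => /eqP //.
Qed.

Lemma gvz_ker (i : Iirr G) : cfker 'chi_i = ('Z('chi_i))%CF -> i = 0.
Proof.
move=> kZ; apply/eqP; apply: contraT => ni0.
have := cfdot_irr i 0; rewrite (negbTE ni0) cfdotE => /eqP.
rewrite mulf_eq0 invr_eq0 pnatr_eq0 eqn0Ngt cardG_gt0 /=.
have val x : x \in G -> 'chi_i x = if x \in cfker 'chi_i then 'chi_i 1%g else 0.
  move=> Gx; case: ifP => [|nk].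
    by rewrite cfkerEirr inE => /eqP.
  by apply: gvz.2 => //; rewrite -kZ nk.
have ge0 x : x \in G -> 0 <= 'chi_i x * ('chi[G]_0 x)^*.
  move=> Gx; rewrite irr0 cfun1E Gx conjC1 mulr1 val //.
  by case: ifP => _ //; apply: Order.POrderTheory.ltW; apply: irr1_gt0.
rewrite (bigD1 1%g) //=.
rewrite (Order.POrderTheory.gt_eqF (_ : 0 < _)) //; apply: ltr_wpDr.
  by apply: sumr_ge0 => x /andP[Gx _]; apply: ge0.
by rewrite irr0 cfun1E group1 conjC1 mulr1 irr1_gt0.
Qed.


Lemma der1_cfcenter (i : Iirr G) : size (cd G) = 2%N ->
  G^`(1)%g \subset ('Z('chi_i))%CF.
Proof.
move=> s2.
have [lin|nlin] := boolP ('chi_i 1%g == 1).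
  apply: subset_trans (normal_sub (cfker_center_normal _)).
  by apply: lin_char_der1; rewrite linE.
set Z := ('Z('chi_i))%CF.
have nsZ : (Z <| G)%g := cfcenter_normal _.
apply: contraT => nsub.
have nab : ~~ abelian (G / Z).
  by apply: contra nsub; apply: der1_min; apply: normal_norm.
have : ~~ [forall j : Iirr (G / Z), 'chi_j \is a linear_char].
  by apply: contra nab => /forallP H; apply/char_abelianP => j; apply: H.
case/forallPn => j nlj.
set k := mod_Iirr j.
have psiE : 'chi_k = ('chi_j %% Z)%CF by rewrite mod_IirrE.
have psi1 : 'chi_k 1%g = 'chi_j 1%g by rewrite psiE cfMod1.
have npsi : 'chi_k 1%g != 1 by rewrite psi1; move: nlj; rewrite qualifE/= irr_char.
have deq : 'chi_k 1%g = 'chi_i 1%g by apply: cd_two.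
have sZK : Z \subset cfker 'chi_k by rewrite psiE cfker_mod.
have sKZ : cfker 'chi_k \subset 'Z('chi_k)%CF := normal_sub (cfker_center_normal _).
have idx : (#|G : Z| = #|G : 'Z('chi_k)%CF|)%g.
  apply/eqP; rewrite -(eqr_nat algC) -!gvz_deg deq //.
have eqZ : Z = 'Z('chi_k)%CF.
  apply/eqP; rewrite eqEcard (subset_trans sZK sKZ) /=.
  have := Lagrange (normal_sub nsZ); have := Lagrange (cfcenter_sub 'chi_k).
  rewrite -idx => <- /eqP; rewrite eqn_pmul2r ?indexg_gt0 // => /eqP->.
  by [].
have k0 : k = 0.
  apply: gvz_ker; apply/eqP; rewrite eqEsubset sKZ -eqZ sZK //.
by move: npsi; rewrite k0 irr0 cfun1E group1 eqxx.
Qed.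
End Aux.

Theorem mainTheorem5 (gT : finGroupType) (G : {group gT}) :
  GVZ G -> size (cd G) = 2 -> nilpotent G /\ nil_class G = 2.
Proof.
move=> gvz s2.
have sub : (G^`(1) \subset 'Z(G))%g.
  rewrite -cap_cfcenter_irr; apply/bigcapsP => i _.
  exact: der1_cfcenter.
have L3 : ('L_3(G) = 1)%g.
  rewrite lcnSn; apply/commG1P; rewrite lcn2.
  exact: subset_trans sub (subsetIr _ _).
have nilG : nilpotent G by apply/lcnP; exists 2%N.
split => //.
apply/eqP; rewrite eqn_leq; apply/andP; split.
  exact/(lcn_nil_classP 2).
by rewrite ltnNge nil_class1; exact: gvz.1.
Qed.
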